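(* Let $\pi\in\mathcal{S}_n$, let $s$ be the position with $\pi_s=1$, let $\mathsf{D}(\pi)=\{i\in\{1,\dots,n-1\}:\pi_i>\pi_{i+1}\}$ be the descent set of $\pi$ and $d=|\mathsf{D}(\pi)|$. Then $\pi$ avoids each of the patterns $1243$, $2143$ and $231$ if and only if one of the following holds: (i) $s>d$ and $\mathsf{D}(\pi)=\{1,2,\dots,d\}$; (ii) $s\le d$, $\mathsf{D}(\pi)=\{1,2,\dots,s-1,s+1,s+2,\dots,d+1\}$, and $\pi_{s-1}>\pi_{s+1}$ if $1<s<n$.
   Context: A permutation $\pi\in\mathcal{S}_n$ avoids $\tau\in\mathcal{S}_k$ if there are no indices $i_1<\dots<i_k$ with $\pi_{i_1}\cdots\pi_{i_k}$ in the same relative order as $\tau_1\cdots\tau_k$. *)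

(* Defs.v *)
From mathcomp Require Import all_boot all_fingroup.
Set Implicit Arguments. Unset Strict Implicit. Unset Printing Implicit Defensive.

(* Convention: pi : 'S_n is a permutation of 'I_n = {0,..,n-1}; its
   one-line word in 1-based notation is  oneline pi i = pi_i  for 1 <= i <= n,
   with values in {1,..,n}:  pi_i := (pi (i-1)) + 1.  Outside 1..n it is 0. *)
Definition oneline {n} (pi : 'S_n) (i : nat) : nat :=
  if @insub nat (fun k => k < n) _ i.-1 is Some j then (pi j).+1 else 0.

(* A pattern tau in S_k is given by its one-line word (a seq nat of length k,
   e.g. [:: 1; 2; 4; 3]).  pi contains tau if there are indices
   i_1 < ... < i_k (0-based here) with pi_{i_1}..pi_{i_k} order-isomorphic to tau. *)
Definition contains {n} (pi : 'S_n) (tau : seq nat) : Prop :=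
  exists f : 'I_(size tau) -> 'I_n,
    (forall a b : 'I_(size tau), a < b -> f a < f b) /\
    (forall a b : 'I_(size tau),
        (pi (f a) < pi (f b)) = (nth 0 tau a < nth 0 tau b)).

Definition avoids {n} (pi : 'S_n) (tau : seq nat) : Prop := ~ contains pi tau.

Definition descents {n} (pi : 'S_n) : seq nat :=
  [seq i <- iota 1 n.-1 | oneline pi i.+1 < oneline pi i].

(* Main.v *)
Require Import Defs.
From mathcomp Require Import all_boot all_fingroup zify.
Set Implicit Arguments. Unset Strict Implicit. Unset Printing Implicit Defensive.

Definition gg n (pi : 'S_n) (i : nat) := oneline pi i.+1.

Lemma ggE n (pi : 'S_n) (j : 'I_n) : gg pi j = (pi j).+1.
Proof.
rewrite /gg /oneline /= insubT //= => h; by rewrite (_ : (Sub (j:nat) h : 'I_n) = j) //; apply: val_inj.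
Qed.

Lemma gg_out n (pi : 'S_n) i : n <= i -> gg pi i = 0.
Proof. by move=> h; rewrite /gg /oneline /= insubF // ltnNge h. Qed.

Lemma gg_pos n (pi : 'S_n) i : i < n -> 0 < gg pi i.
Proof. by move=> h; rewrite (ggE pi (Ordinal h)). Qed.

Lemma gg_inj n (pi : 'S_n) i j : i < n -> j < n -> gg pi i = gg pi j -> i = j.
Proof.
move=> hi hj; rewrite (ggE pi (Ordinal hi)) (ggE pi (Ordinal hj)) => /succn_inj/val_inj/perm_inj/(congr1 val).
by [].
Qed.

Lemma mk_contains n (pi:'S_n) tau (q : nat -> nat) :
 (forall a, a < size tau -> q a < n) ->
 (forall a b, a < b -> b < size tau -> q a < q b) ->
 (forall a b, a < size tau -> b < size tau ->
    (gg pi (q a) < gg pi (q b)) = (nth 0 tau a < nth 0 tau b)) ->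
 contains pi tau.
Proof.
move=> h1 h2 h3; exists (fun a : 'I_(size tau) => Ordinal (h1 a (ltn_ord a))); split.
  by move=> a b ab /=; exact: h2 ab (ltn_ord b).
move=> a b; rewrite -h3 //.
have Ea := ggE pi (Ordinal (h1 a (ltn_ord a))).
have Eb := ggE pi (Ordinal (h1 b (ltn_ord b))).
simpl in Ea, Eb; by rewrite Ea Eb.
Qed.

Lemma ext_contains n (pi:'S_n) tau : contains pi tau -> exists q : nat -> nat,
 [/\ (forall a, a < size tau -> q a < n),
 (forall a b, a < b -> b < size tau -> q a < q b) &
 (forall a b, a < size tau -> b < size tau ->
    (gg pi (q a) < gg pi (q b)) = (nth 0 tau a < nth 0 tau b))].
Proof.
move=> [f [h1 h2]].
pose q a := if @insub nat (fun k => k < size tau) _ a is Some a' then val (f a') else 0.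
have qE a (h : a < size tau) : q a = f (Ordinal h).
  rewrite /q insubT /=; congr (nat_of_ord (f _)); exact: val_inj.
exists q; split.
- by move=> a h; rewrite qE.
- move=> a b ab hb; have ha := ltn_trans ab hb; rewrite !(qE _ ha) !(qE _ hb).
  exact: (h1 (Ordinal ha) (Ordinal hb)).
- move=> a b ha hb; rewrite (qE _ ha) (qE _ hb) !ggE ltnS.
  exact: (h2 (Ordinal ha) (Ordinal hb)).
Qed.

Lemma c231 n (pi : 'S_n) x y z : x < y -> y < z -> z < n ->
  gg pi z < gg pi x -> gg pi x < gg pi y -> contains pi [:: 2; 3; 1].
Proof.
move=> xy yz zn h1 h2; apply: (@mk_contains _ _ _ (fun a => nth 0 [:: x; y; z] a)).
- move=> [|[|[|a]]] //= _; lia.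
- move=> [|[|[|a]]] [|[|[|b]]] //= _ _; lia.
- move=> [|[|[|a]]] [|[|[|b]]] //= _ _; lia.
Qed.

Lemma c1243 n (pi : 'S_n) w x y z : w < x -> x < y -> y < z -> z < n ->
  gg pi w < gg pi x -> gg pi x < gg pi z -> gg pi z < gg pi y ->
  contains pi [:: 1; 2; 4; 3].
Proof.
move=> ? ? ? ? ? ? ?; apply: (@mk_contains _ _ _ (fun a => nth 0 [:: w; x; y; z] a)).
- move=> [|[|[|[|a]]]] //= _; lia.
- move=> [|[|[|[|a]]]] [|[|[|[|b]]]] //= _ _; lia.
- move=> [|[|[|[|a]]]] [|[|[|[|b]]]] //= _ _; lia.
Qed.

Lemma c2143 n (pi : 'S_n) w x y z : w < x -> x < y -> y < z -> z < n ->
  gg pi x < gg pi w -> gg pi w < gg pi z -> gg pi z < gg pi y ->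
  contains pi [:: 2; 1; 4; 3].
Proof.
move=> ? ? ? ? ? ? ?; apply: (@mk_contains _ _ _ (fun a => nth 0 [:: w; x; y; z] a)).
- move=> [|[|[|[|a]]]] //= _; lia.
- move=> [|[|[|[|a]]]] [|[|[|[|b]]]] //= _ _; lia.
- move=> [|[|[|[|a]]]] [|[|[|[|b]]]] //= _ _; lia.
Qed.

Lemma u231 n (pi : 'S_n) : contains pi [:: 2; 3; 1] -> exists x y z,
  [/\ x < y, y < z, z < n, gg pi z < gg pi x & gg pi x < gg pi y].
Proof.
move=> /ext_contains [q [h1 h2 h3]].
exists (q 0), (q 1), (q 2); split.
- exact: h2.
- exact: h2.
- exact: h1.
- by rewrite h3.
- by rewrite h3.
Qed.

Lemma u43 n (pi : 'S_n) tau : tau = [:: 1; 2; 4; 3] \/ tau = [:: 2; 1; 4; 3] ->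
  contains pi tau -> exists w x y z,
  [/\ w < x, x < y, y < z, z < n & 
     [/\ gg pi w < gg pi z, gg pi x < gg pi z & gg pi z < gg pi y]].
Proof.
move=> htau /ext_contains [q [h1 h2 h3]].
have st : size tau = 4 by case: htau => ->.
rewrite st in h1 h2 h3.
exists (q 0), (q 1), (q 2), (q 3); split; [exact: h2 | exact: h2 | exact: h2 | exact: h1 |].
by split; rewrite h3 //; case: htau => ->.
Qed.

Lemma gg_tri n (pi : 'S_n) i j : i < n -> j < n -> i != j ->
  gg pi i < gg pi j \/ gg pi j < gg pi i.
Proof.
move=> hi hj ij; case: (ltngtP (gg pi i) (gg pi j)); [by left | by right |].
by move/(gg_inj hi hj)/eqP; rewrite (negbTE ij).
Qed.

Lemma dec_chain (g : nat -> nat) lo hi :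
  (forall i, lo <= i -> i.+1 <= hi -> g i.+1 < g i) ->
  forall a b, lo <= a -> a < b -> b <= hi -> g b < g a.
Proof.
move=> h a; elim=> [|b IH] // la ab bh.
have hb := h b (leq_trans la (ltnSE ab)) bh.
case: (ltngtP a b) => [lt|gt|eq].
- have := IH la lt (ltnW bh); lia.
- lia.
- by subst.
Qed.

Lemma inc_chain (g : nat -> nat) lo hi :
  (forall i, lo <= i -> i.+1 <= hi -> g i < g i.+1) ->
  forall a b, lo <= a -> a < b -> b <= hi -> g a < g b.
Proof.
move=> h a; elim=> [|b IH] // la ab bh.
have hb := h b (leq_trans la (ltnSE ab)) bh.
case: (ltngtP a b) => [lt|gt|eq].
- have := IH la lt (ltnW bh); lia.
- lia.
- by subst.
Qed.

Definition shape n (pi : 'S_n) s0 e :=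
 [/\ s0 < e,
  (forall i, i.+1 <= s0 -> gg pi i.+1 < gg pi i),
  (forall i, s0 < i -> i < e -> i.+1 < n -> gg pi i.+1 < gg pi i),
  (forall i, e <= i -> i.+1 < n -> gg pi i < gg pi i.+1) &
  (s0.+1 < e -> e < n /\ (0 < s0 -> gg pi s0.+1 < gg pi s0.-1))].

Definition av3 n (pi : 'S_n) :=
  avoids pi [:: 1; 2; 4; 3] /\ avoids pi [:: 2; 1; 4; 3] /\ avoids pi [:: 2; 3; 1].

Lemma av_shape n (pi : 'S_n) s0 : s0 < n -> gg pi s0 = 1 -> av3 pi ->
  exists e, shape pi s0 e.
Proof.
move=> hs0 hg [a1 [a2 a3]].
have g1 i : i < n -> i != s0 -> 1 < gg pi i.
  move=> hi his; have := gg_pos pi hi.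
  have : gg pi i != gg pi s0 by apply/eqP => /(gg_inj hi hs0) /eqP; rewrite (negbTE his).
  rewrite hg; lia.
have hA i : i.+1 <= s0 -> gg pi i.+1 < gg pi i.
  move=> hi; have hi1 : i < n by lia. have hi2 : i.+1 < n by lia.
  have [] := @gg_tri _ pi i i.+1 hi1 hi2; first by rewrite neq_ltn ltnSn.
    move=> h; case: (ltngtP i.+1 s0) => [lt|gt|eq].
    - case: a3; apply: (@c231 _ _ i i.+1 s0) => //; rewrite hg; apply: g1; lia.
    - lia.
    - subst s0; have := gg_pos pi (ltnW hs0); lia.
  by [].
have step i : s0 < i -> i.+2 < n -> gg pi i < gg pi i.+1 -> gg pi i.+1 < gg pi i.+2.
  move=> si hi h.
  have [] // := @gg_tri _ pi i.+1 i.+2 (ltnW hi) hi; first by rewrite neq_ltn ltnSn.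
  move=> h2; have [] := @gg_tri _ pi i i.+2 (ltnW (ltnW hi)) hi; first by rewrite neq_ltn ltnW.
  - move=> h3; case: a1; apply: (@c1243 _ _ s0 i i.+1 i.+2) => //; rewrite hg; apply: g1; lia.
  - move=> h3; case: a3; exact: (@c231 _ _ i i.+1 i.+2).
have asc i k : s0 < i -> (i + k).+1 < n -> gg pi i < gg pi i.+1 -> gg pi (i + k) < gg pi (i + k).+1.
  move=> si; elim: k => [|k IH]; first by rewrite addn0.
  move=> hk h; rewrite addnS; apply: step; [lia | lia | apply: IH => //; lia].
have hC : 0 < s0 -> s0.+2 < n -> gg pi s0.+2 < gg pi s0.+1 -> gg pi s0.+1 < gg pi s0.-1.
  move=> s0p hn h.
  have [] // := @gg_tri _ pi s0.-1 s0.+1 (leq_ltn_trans (leq_pred _) hs0) (ltnW hn).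
    by rewrite neq_ltn; apply/orP; left; lia.
  move=> h2; have [] := @gg_tri _ pi s0.-1 s0.+2 (leq_ltn_trans (leq_pred _) hs0) hn.
    by rewrite neq_ltn; apply/orP; left; lia.
  - move=> h3; case: a2; apply: (@c2143 _ _ s0.-1 s0 s0.+1 s0.+2) => //; try lia.
    rewrite hg; apply: g1; lia.
  - move=> h3; case: a3; apply: (@c231 _ _ s0.-1 s0.+1 s0.+2) => //; lia.
pose P k := (s0 < k) && ((n <= k.+1) || (gg pi k < gg pi k.+1)).
have exP : exists k, P k by exists n; rewrite /P hs0 leqnSn.
case: (ex_minnP exP) => e /andP [se He] Hmin.
have hD i : s0 < i -> i < e -> i.+1 < n -> gg pi i.+1 < gg pi i.
  move=> si ie hi.
  have nP : ~~ P i by apply/negP => /Hmin; lia.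
  move: nP; rewrite /P si /= negb_or -ltnNge => /andP [_ nh].
  have [] // := @gg_tri _ pi i i.+1 (ltnW hi) hi; first by rewrite neq_ltn ltnSn.
  by move=> h; rewrite h in nh.
exists e; split => //.
- move=> i ei hi; case/orP: He => [He|He]; first lia.
  have := @asc e (i - e) se; rewrite subnKC //; apply => //.
- move=> h; have nP : ~~ P e.-1 by apply/negP => /Hmin; lia.
  move: nP; rewrite /P (_ : s0 < e.-1) /=; last lia.
  rewrite negb_or -ltnNge => /andP [en _]; have en' : e < n by lia.
  split => // s0p; apply: hC => //; first lia.
  apply: hD => //; lia.
Qed.

Lemma shape_av n (pi : 'S_n) s0 e : s0 < n -> gg pi s0 = 1 -> shape pi s0 e -> av3 pi.
Proof.
move=> hs0 hg [se hA hD hI hC].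
have decA a b : a < b -> b <= s0 -> gg pi b < gg pi a.
  by move=> ab bs; apply: (@dec_chain _ 0 s0) => // i _; apply: hA.
have decD a b : s0 < a -> a < b -> b < e -> b < n -> gg pi b < gg pi a.
  move=> sa ab be bn; apply: (@dec_chain _ a b) => // i ai ib; apply: hD; lia.
have incI a b : e <= a -> a < b -> b < n -> gg pi a < gg pi b.
  move=> ea ab bn; apply: (@inc_chain _ a b) => // i ai ib; apply: hI; lia.
have pos i : i < n -> 0 < gg pi i by apply: gg_pos.
have key x y : x < s0 -> s0 < y -> y < e -> y < n -> gg pi y < gg pi x.
  move=> xs sy ye yn; have [en hc] := hC (leq_ltn_trans sy ye).
  have h1 : gg pi s0.+1 < gg pi s0.-1 by apply: hc; lia.
  have h2 : gg pi s0.-1 <= gg pi x.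
    case: (ltngtP x s0.-1) => [lt|gt|eq]; [|lia|by rewrite eq].
    by apply: ltnW; apply: decA => //; lia.
  have h3 : gg pi y <= gg pi s0.+1.
    case: (ltngtP s0.+1 y) => [lt|gt|eq]; [|lia|by rewrite eq].
    by apply: ltnW; apply: decD => //; lia.
  lia.
split; [|split].
- move/(u43 (or_introl erefl)) => [w [x [y [z [wx xy yz zn [h1 h2 h3]]]]]].
  case: (leqP y s0) => ys.
    have := decA w y (ltn_trans wx xy) ys; lia.
  case: (leqP e y) => ey.
    have := incI y z ey yz zn; lia.
  case: (leqP x s0) => xs.
    have := key w y (leq_trans wx xs) ys ey (ltn_trans yz zn); lia.
  have := decD x y xs xy ey (ltn_trans yz zn); lia.
- move/(u43 (or_intror erefl)) => [w [x [y [z [wx xy yz zn [h1 h2 h3]]]]]].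
  case: (leqP y s0) => ys.
    have := decA w y (ltn_trans wx xy) ys; lia.
  case: (leqP e y) => ey.
    have := incI y z ey yz zn; lia.
  case: (leqP x s0) => xs.
    have := key w y (leq_trans wx xs) ys ey (ltn_trans yz zn); lia.
  have := decD x y xs xy ey (ltn_trans yz zn); lia.
- move/u231 => [x [y [z [xy yz zn h1 h2]]]].
  case: (leqP y s0) => ys.
    have := decA x y xy ys; lia.
  case: (leqP e y) => ey.
    have := incI y z ey yz zn; lia.
  case: (ltngtP x s0) => [xs|xs|xs].
  + have := key x y xs ys ey (ltn_trans yz zn); lia.
  + have := decD x y xs xy ey (ltn_trans yz zn); lia.
  + subst x; have := pos z zn; lia.
Qed.

Lemma memD n (pi : 'S_n) j :
  (j.+1 \in descents pi) = (j.+1 < n) && (gg pi j.+1 < gg pi j).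
Proof.
rewrite /descents mem_filter mem_iota /gg andbC; congr (_ && _).
case: n pi => [|n] pi //=; lia.
Qed.

Lemma memD0 n (pi : 'S_n) : (0 \in descents pi) = false.
Proof. by rewrite /descents mem_filter mem_iota /= andbF. Qed.

Lemma size_filter1 e s : 1 <= s <= e -> size [seq i <- iota 1 e | i != s] = e.-1.
Proof.
move=> hs; rewrite size_filter.
transitivity (count (predC (pred1 s)) (iota 1 e)); first by [].
have := count_predC (pred1 s) (iota 1 e).
rewrite size_iota count_uniq_mem ?iota_uniq // mem_iota.
have -> : (1 <= s < 1 + e) by lia.
rewrite /=; lia.
Qed.

Lemma shape_rhs n (pi : 'S_n) s0 e : s0 < n -> gg pi s0 = 1 -> shape pi s0 e ->
  let D := descents pi in
  let d := size D in
  ((d < s0.+1 /\ D =i iota 1 d)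
   \/
   (s0.+1 <= d /\ D =i [seq i <- iota 1 d.+1 | i != s0.+1] /\
    (1 < s0.+1 < n -> oneline pi s0.+2 < oneline pi s0.+1.-1))).
Proof.
move=> hs0 hg [se hA hD hI hC] D d.
have charD j : (j \in D) = (0 < j <= s0) || (s0.+1 < j <= e).
  case: j => [|j0]; first by rewrite memD0.
  rewrite memD.
  case: (ltngtP j0 s0) => [lt|gt|eq].
  - rewrite (hA j0 lt) andbT /=; lia.
  - have [je|je] := ltnP j0 e.
    + have [en _] := hC (leq_ltn_trans gt je).
      have jn : j0.+1 < n by lia.
      rewrite jn (hD j0 gt je jn) /=; lia.
    + have [jn|jn] := ltnP j0.+1 n.
      * have := hI j0 je jn; lia.
      * lia.
  - subst j0; rewrite hg.
    case: (ltnP s0.+1 n) => jn /=.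
    * have := gg_pos pi jn; lia.
    * lia.
have uD : uniq D by rewrite /D /descents filter_uniq // iota_uniq.
case: (ltngtP e s0.+1) => [lt|gt|eq].
- lia.
- have [en hc] := hC gt.
  have eqD : D =i [seq i <- iota 1 e | i != s0.+1].
    move=> j; rewrite charD mem_filter mem_iota; lia.
  have dE : d = e.-1.
    rewrite /d -(size_filter1 (e := e) (s := s0.+1)); last lia.
    apply: perm_size; apply: uniq_perm => //.
    by rewrite filter_uniq // iota_uniq.
  right; split; first lia.
  split; first by rewrite dE prednK //; lia.
  move=> hh; have s0p : 0 < s0 by lia.
  have := hc s0p; rewrite /gg prednK //.
- have eqD : D =i iota 1 s0.
    move=> j; rewrite charD mem_iota; lia.
  have dE : d = s0.
    rewrite /d -(size_iota 1 s0).
    apply: perm_size; apply: uniq_perm => //.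
    by rewrite iota_uniq.
  left; split; first lia.
  by rewrite dE.
Qed.

Lemma rhs_shape n (pi : 'S_n) s0 : s0 < n -> gg pi s0 = 1 ->
  let D := descents pi in
  let d := size D in
  ((d < s0.+1 /\ D =i iota 1 d)
   \/
   (s0.+1 <= d /\ D =i [seq i <- iota 1 d.+1 | i != s0.+1] /\
    (1 < s0.+1 < n -> oneline pi s0.+2 < oneline pi s0.+1.-1))) ->
  exists e, shape pi s0 e.
Proof.
move=> hs0 hg D d.
have notD i : i.+1 < n -> i.+1 \notin D -> gg pi i < gg pi i.+1.
  move=> hn; rewrite memD hn /= -leqNgt leq_eqVlt => /orP [/eqP h|//].
  by have := gg_inj (ltnW hn) hn h; lia.
have inD i : i.+1 \in D -> gg pi i.+1 < gg pi i by rewrite memD => /andP [].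
case=> [[ds eqD] | [sd [eqD hc]]].
- have dE : d = s0.
    case: (ltngtP d s0) => [lt|gt|//]; last lia.
    have s0p : 0 < s0 by lia.
    have h1 : s0.-1.+1 < n by rewrite prednK.
    have := notD s0.-1 h1; rewrite prednK // eqD mem_iota hg.
    have h2 : s0.-1 < n by lia.
    have := gg_pos pi h2; have : s0.-1 <> s0 by lia.
    move=> ne; have : gg pi s0.-1 != gg pi s0.
      by apply/eqP => /(gg_inj h2 hs0).
    rewrite hg; lia.
  exists s0.+1; split => //.
  + by move=> i hi; apply: inD; rewrite eqD mem_iota dE; lia.
  + lia.
  + move=> i hi hn; apply: notD => //; rewrite eqD mem_iota dE; lia.
  + lia.
- have dD : d.+1 \in D by rewrite eqD mem_filter mem_iota; lia.
  have dn : d.+1 < n by move: dD; rewrite memD => /andP [].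
  exists d.+1; split.
  + lia.
  + by move=> i hi; apply: inD; rewrite eqD mem_filter mem_iota; lia.
  + by move=> i h1 h2 h3; apply: inD; rewrite eqD mem_filter mem_iota; lia.
  + move=> i hi hn; apply: notD => //; rewrite eqD mem_filter mem_iota; lia.
  + move=> _; split => // s0p.
    have := hc (ltac:(lia)); rewrite /gg prednK //.
Qed.

Theorem corollary3p13 (n : nat) (pi : 'S_n) (s : nat)
  (hs : 1 <= s <= n) (hs1 : oneline pi s = 1) :
  let D := descents pi in
  let d := size D in
  (avoids pi [:: 1; 2; 4; 3] /\ avoids pi [:: 2; 1; 4; 3] /\ avoids pi [:: 2; 3; 1])
  <->
  ((d < s /\ D =i iota 1 d)
   \/
   (s <= d /\ D =i [seq i <- iota 1 d.+1 | i != s] /\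
    (1 < s < n -> oneline pi s.+1 < oneline pi s.-1))).
Proof.
case: s hs hs1 => [|s0] // hs hs1.
have hs0 : s0 < n by lia.
have hg : gg pi s0 = 1 by [].
move=> D d; split.
- move/(av_shape hs0 hg) => [e sh]; exact: (shape_rhs hs0 hg sh).
- move=> H; have [e sh] := rhs_shape hs0 hg H; exact: (shape_av hs0 hg sh).
Qed.
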